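(* Let $m,n\geq1$. The graph $\Gamma_m^n$ is bipartite with respect to the decomposition of its vertex set into the vertices $e_\lambda$ with $|\lambda|$ even and those with $|\lambda|$ odd. In particular, paths in $\Gamma_m^n$ of even length can only connect weights whose heights have the same parity, and paths of odd length can only connect weights whose heights have different parity.
   Context: A weight of type $(m,n)$ is a word $\lambda=\lambda_1\cdots\lambda_{m+n}$ in $\vee$ (''down'') and $\wedge$ (''up'') with $m$ letters $\vee$ and $n$ letters $\wedge$; $\Lambda_m^n$ is the set of weights. The height of $\lambda$ is $|\lambda|=\sum_{i:\lambda_i=\vee}\#\{j<i:\lambda_j=\wedge\}$. For $\lambda\in\Lambda_m^n$ let $\underline\lambda$ be the set of ''cups'' obtained by repeatedly pairing a $\vee$ with a $\wedge$ that are neighbours ($\vee$ on the left), ignoring positions already paired (positions on the line at which nested non-crossing lower semicircles are drawn); mirroring each cup above the line gives the closed circles of the degree-zero arc diagram $e_\lambda$. $\Gamma_m^n$ is the simple undirected graph with vertex set $\{e_\lambda\}_{\lambda\in\Lambda_m^n}$ and an edge between $e_\lambda$ and $e_\mu$ if one of $\lambda,\mu$ is obtained from the other by exchanging the labels at the two endpoints of one cup (i.e. of a $\vee\cdots\wedge$ pair lying on a single circle of $e_\lambda$, resp. $e_\mu$). *)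

(* Defs.v *)
From mathcomp Require Import all_boot.
Set Implicit Arguments. Unset Strict Implicit. Unset Printing Implicit Defensive.

(* Convention: a letter is a bool; [true] = "down" (\vee), [false] = "up" (\wedge).
   Positions on the line are numbered 0, 1, ..., m+n-1. *)

Definition weight (m n : nat) := {t : (m + n).-tuple bool | count id t == m}.

Definition word {m n} (x : weight m n) : seq bool := tval (sval x).

Definition height (s : seq bool) : nat :=
  \sum_(i < size s | nth false s i) count negb (take i s).

(* One step of the cup construction: [u] lists the still unpaired positions
   (with their labels) from left to right; find the leftmost \vee whose
   neighbour (among unpaired positions) to the right is a \wedge, pair them,
   and remove both from the list of unpaired positions. *)
Fixpoint pair_step (u : seq (nat * bool)) : option ((nat * nat) * seq (nat * bool)) :=
  match u with
  | [::] => None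
  | x :: t =>
      if x.2 && (if t is y :: _ then ~~ y.2 else false)
      then Some ((x.1, (head x t).1), behead t)
      else omap (fun p => (p.1, x :: p.2)) (pair_step t)
  end.

Fixpoint cups_iter (k : nat) (u : seq (nat * bool)) (acc : seq (nat * nat)) :=
  match k with
  | 0 => acc
  | k'.+1 =>
      match pair_step u with
      | Some (c, r) => cups_iter k' r (c :: acc)
      | None => acc
      end
  end.

(* the set of cups of underline(lambda): pairs (i, j), i < j, lambda_i = \vee, lambda_j = \wedge *)
Definition cups (s : seq bool) : seq (nat * nat) :=
  cups_iter (size s) (zip (iota 0 (size s)) s) [::].

Definition swap_at (s : seq bool) (c : nat * nat) : seq bool :=
  set_nth false (set_nth false s c.1 (nth false s c.2)) c.2 (nth false s c.1).

Definition adj (s t : seq bool) : bool :=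
  has (fun c => t == swap_at s c) (cups s) || has (fun c => s == swap_at t c) (cups t).

Definition Gamma_edge (m n : nat) : rel (weight m n) :=
  fun x y => adj (word x) (word y).

(* Main.v *)
Require Import Defs.
From mathcomp Require Import all_boot zify.

Lemma sum_const_nth (s : seq bool) (c : nat) :
  \sum_(i < size s | nth false s i) c = c * count id s.
Proof.
elim: s => [|b s IH]; first by rewrite big_ord0 muln0.
rewrite big_mkcond (big_ord_recl (size s)) /= -big_mkcond /= IH.
by case: b => /=; lia.
Qed.

Lemma height_cons b s : height (b :: s) = height s + (~~ b) * count id s.
Proof.
rewrite /height big_mkcond (big_ord_recl (size s)) -big_mkcond /=.
rewrite big_split /= sum_const_nth.
under eq_bigl => i do rewrite add0n.
under eq_bigr => i _ do rewrite add0n.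
rewrite (_ : (if b then _ else 0) = 0); last by case: b.
lia.
Qed.

Lemma height_cat s t : height (s ++ t) = height s + height t + count id t * count negb s.
Proof.
elim: s => [|x s IH]; first by rewrite /= /height big_ord0; lia.
rewrite cat_cons !height_cons IH count_cat /=.
case: x => /=; nia.
Qed.

Lemma height_nil : height [::] = 0.
Proof. by rewrite /height big_ord0. Qed.

Lemma height_swap a b c :
  height (a ++ false :: b ++ true :: c) = height (a ++ true :: b ++ false :: c) + (size b).+1.
Proof.
rewrite !height_cat !(height_cons _ (_ ++ _)) !height_cat !height_cons ?height_nil /=
  !count_cat /=.
have : count id b + count negb b = size b by rewrite -(count_predC id b).
nia.
Qed.

Lemma set_nth_mid (a r : seq bool) y z : set_nth false (a ++ y :: r) (size a) z = a ++ z :: r.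
Proof. by elim: a => [|x a IH] //=; rewrite IH. Qed.

Lemma decomp (s : seq bool) i j : i < j -> j < size s ->
  s = take i s ++ nth false s i :: take (j - i.+1) (drop i.+1 s) ++ nth false s j :: drop j.+1 s.
Proof.
move=> hij hj.
rewrite -{1}(cat_take_drop i s); congr (_ ++ _).
rewrite (drop_nth false (ltn_trans hij hj)); congr (_ :: _).
rewrite -(drop_nth false hj).
have -> : drop j s = drop (j - i.+1) (drop i.+1 s) by rewrite drop_drop; congr drop; lia.
by rewrite cat_take_drop.
Qed.

Lemma swap_parity s i j : i < j -> j < size s -> nth false s i -> ~~ nth false s j ->
  odd (j - i) -> odd (height (swap_at s (i,j))) != odd (height s).
Proof.
move=> hij hj hi hjn hodd.
have hs := @decomp s i j hij hj.
set a := take i s in hs; set b := take (j - i.+1) (drop i.+1 s) in hs;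
  set c := drop j.+1 s in hs.
have ha : size a = i by rewrite size_take; case: ifP => //; lia.
have hb : size b = j - i.+1 by rewrite size_take size_drop; case: ifP => //; lia.
move: hi hjn; rewrite hs nth_cat ha ltnn subnn /=.
rewrite nth_cat ha (_ : j < i = false); last lia.
rewrite (_ : j - i = (size b).+1); last lia.
rewrite /= nth_cat ltnn subnn /= => -> /negbTE ->.
have -> : swap_at (a ++ true :: b ++ false :: c) (i, j) = a ++ false :: b ++ true :: c.
  have hj' : j = size (a ++ false :: b) by rewrite size_cat /=; lia.
  have e1 : nth false (a ++ true :: b ++ false :: c) i = true.
    by rewrite nth_cat ha ltnn subnn.
  have e2 : nth false (a ++ true :: b ++ false :: c) j = false.
    rewrite hj' size_cat /= nth_cat.
    rewrite (_ : size a + (size b).+1 < size a = false); last lia.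
    by rewrite (_ : size a + (size b).+1 - size a = (size b).+1) /= ?nth_cat ?ltnn ?subnn //; lia.
  rewrite /swap_at /= e1 e2 -ha set_nth_mid hj'.
  have -> : a ++ false :: b ++ false :: c = (a ++ false :: b) ++ false :: c by rewrite -catA.
  by rewrite set_nth_mid -catA.
rewrite height_swap oddD /=.
move: hodd; rewrite (_ : j - i = (size b).+1); last lia.
by rewrite /= => ->; case: (odd (height _)).
Qed.

Definition rl (e1 e2 : nat * bool) := (e1.1 < e2.1) && (odd e1.1 != odd e2.1).
Definition good (s : seq bool) (e : nat * bool) := (e.1 < size s) && (nth false s e.1 == e.2).
Definition goodc (s : seq bool) (c : nat * nat) :=
  [&& c.1 < c.2, c.2 < size s, nth false s c.1, ~~ nth false s c.2 & odd c.1 != odd c.2].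

Lemma pair_step_path u c r : pair_step u = Some (c, r) ->
  (forall z, path rl z u -> path rl z r) /\ (sorted rl u -> sorted rl r) /\
  {subset r <= u}.
Proof.
elim: u c r => [|x t IH] c r //=.
case: ifP => [/andP [hx ht] | hn].
  case: t IH ht => [|y t] // IH ht [_ <-]; split; [|split].
  - move=> z /= /and3P [hzx hxy hyt]; case: t hyt {IH ht} => [|w t'] //= /andP [hyw ->].
    rewrite andbT; move: hzx hxy hyw; rewrite /rl.
    case/andP => h1 h2 /andP [h3 h4] /andP [h5 h6]; apply/andP; split; first lia.
    by move: h2 h4 h6; case: (odd z.1); case: (odd x.1); case: (odd y.1); case: (odd w.1).
  - by move=> /= /andP [_ /path_sorted].
  - by move=> e he; rewrite !inE he !orbT.
case e: (pair_step t) => [[c' r']|] //= [_ <-].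
have [h1 [h2 h3]] := IH _ _ e; split; [|split].
- by move=> z /= /andP [-> /h1].
- by move=> /= /h1.
- by move=> w; rewrite !inE => /orP [->|/h3 ->] //; rewrite orbT.
Qed.

Lemma pair_step_good s u c r : pair_step u = Some (c, r) -> sorted rl u -> all (good s) u ->
  goodc s c.
Proof.
elim: u c r => [|x t IH] c r //=.
case: ifP => [/andP [hx ht] | hn].
  case: t IH ht => [|y t] // IH ht [<- _] /= /andP [hxy _] /and3P [gx gy _].
  move: hxy gx gy; rewrite /rl /good /goodc /=.
  case/andP => -> -> /andP [_ /eqP ->] /andP [-> /eqP ->].
  by rewrite hx ht.
case e: (pair_step t) => [[c' r']|] //= [<- _] hp /andP [_ ha].
exact: (IH _ _ e (path_sorted hp) ha).
Qed.

Lemma cups_iter_good s k u acc : sorted rl u -> all (good s) u -> all (goodc s) acc ->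
  all (goodc s) (cups_iter k u acc).
Proof.
elim: k u acc => [|k IH] u acc //= hs hg ha.
case e: (pair_step u) => [[c r]|] //.
have [_ [h2 h3]] := @pair_step_path _ _ _ e.
apply: IH; first exact: h2.
- by apply/allP => w /h3 hw; exact: (allP hg).
- by rewrite /= ha (@pair_step_good s _ _ _ e hs hg).
Qed.

Lemma zip_path k b (s : seq bool) : path rl (k, b) (zip (iota k.+1 (size s)) s).
Proof.
elim: s k b => [|b' s IH] k b //=.
by rewrite IH /rl /= ltnSn /= andbT; case: (odd k).
Qed.

Lemma cups_good s : all (goodc s) (cups s).
Proof.
rewrite /cups; apply: cups_iter_good => //.
- by case: s => //= b s; exact: zip_path.
- apply/allP => e /nthP => /(_ (0, false)) [i].
  rewrite size_zip size_iota minnn => hi <-.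
  by rewrite nth_zip ?size_iota // nth_iota // /good /= add0n hi eqxx.
Qed.

Lemma cup_parity s c : c \in cups s -> odd (height (swap_at s c)) != odd (height s).
Proof.
move=> /(allP (cups_good s)); case: c => i j /and5P [/= h1 h2 h3 h4 h5].
apply: swap_parity => //.
move: h5; rewrite -(subnK (ltnW h1)) oddD.
by rewrite addnK; case: (odd (j - i)); case: (odd i).
Qed.

Theorem proposition2p6 (m n : nat) (hm : 1 <= m) (hn : 1 <= n) :
  (forall x y : weight m n, Gamma_edge x y ->
     odd (height (word x)) != odd (height (word y))) /\
  (forall (x : weight m n) (p : seq (weight m n)), path (@Gamma_edge m n) x p ->
     odd (height (word (last x p))) = odd (height (word x)) (+) odd (size p)).
Proof.
have H1 : forall x y : weight m n, Gamma_edge x y ->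
     odd (height (word x)) != odd (height (word y)).
  move=> x y; rewrite /Gamma_edge /adj => /orP [] /hasP [c hc /eqP ->].
  - by rewrite eq_sym; exact: cup_parity.
  - exact: cup_parity.
split => //.
move=> x p; elim: p x => [|y p IH] x /=; first by rewrite addbF.
move=> /andP [hxy hp]; rewrite IH //.
move: (H1 _ _ hxy); case: (odd (height (word x))); case: (odd (height (word y))) => //=.
all: by case: (odd (size p)).
Qed.
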